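(* For every integer $r\ge1$ and every $x\in D$ (for $r=1$, every $x\in\mathbb C$ with $\mathcal S_1(x)\neq0$), $$\mathcal C_r(x)^{2^{r-1}}=\frac{\mathcal S_r(2x)}{\mathcal S_r(x)^{2^{r-1}}}.$$
   Context: For an integer $r\ge2$ let $P_r(y)=(1-y)\exp\left(y+\frac{y^2}{2}+\cdots+\frac{y^r}{r}\right)$. The multiple cosine function of Kurokawa–Koyama of order $r\ge2$ is $\mathcal C_r(x)=\prod_{n\ge1,\ n\text{ odd}}\left\{P_r\left(\frac{x}{n/2}\right)P_r\left(-\frac{x}{n/2}\right)^{(-1)^{r-1}}\right\}^{(n/2)^{r-1}}$, interpreted as $\mathcal C_r(x)=\exp\Big(\sum_{n\ge1,\,n\text{ odd}}(n/2)^{r-1}\big[\operatorname{Log}P_r(2x/n)+(-1)^{r-1}\operatorname{Log}P_r(-2x/n)\big]\Big)$, where $\operatorname{Log}P_r(y):=\operatorname{Log}(1-y)+y+\frac{y^2}{2}+\cdots+\frac{y^r}{r}$ with $\operatorname{Log}$ the principal branch, for $x\in D=\mathbb C\setminus\big((-\infty,-\tfrac12]\cup[\tfrac12,\infty)\big)$; $\mathcal C_1(x)=2\cos(\pi x)$. Kurokawa's multiple sine function is $\mathcal S_1(x)=2\sin(\pi x)$ and, for $r\ge2$, the meromorphic function $\mathcal S_r(x)=\exp\left(\frac{x^{r-1}}{r-1}\right)\prod_{n=1}^\infty\left\{P_r\left(\frac xn\right)P_r\left(-\frac xn\right)^{(-1)^{r-1}}\right\}^{n^{r-1}}$. *)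

(* Defs.v *)
From Stdlib Require Import Reals ClassicalEpsilon.
From Coquelicot Require Import Coquelicot.
Open Scope R_scope.

Notation CC := Complex.C.

(* Limit of a complex sequence (classical choice; 0 if no limit exists). *)
Definition climC (u : nat -> CC) : CC :=
  epsilon (inhabits (RtoC 0)) (fun l => filterlim u eventually (locally l)).

(* Complex exponential, principal argument in (-pi, pi], principal Log. *)
Definition Cexp (z : CC) : CC :=
  (exp (fst z) * cos (snd z), exp (fst z) * sin (snd z)).
Definition Carg (z : CC) : R :=
  if Rle_dec 0 (snd z) then acos (fst z / Cmod z) else - acos (fst z / Cmod z).
Definition CLog (z : CC) : CC := (ln (Cmod z), Carg z).

Definition Ccos (z : CC) : CC :=
  Cdiv (Cplus (Cexp (Cmult Ci z)) (Cexp (Copp (Cmult Ci z)))) (RtoC 2).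
Definition Csin (z : CC) : CC :=
  Cdiv (Cminus (Cexp (Cmult Ci z)) (Cexp (Copp (Cmult Ci z)))) (Cmult (RtoC 2) Ci).

Fixpoint Csum1 (f : nat -> CC) (n : nat) : CC :=
  match n with O => RtoC 0 | S m => Cplus (Csum1 f m) (f (S m)) end.
Fixpoint Cprod1 (f : nat -> CC) (n : nat) : CC :=
  match n with O => RtoC 1 | S m => Cmult (Cprod1 f m) (f (S m)) end.

Definition Tr (r : nat) (y : CC) : CC :=
  Csum1 (fun k => Cdiv (Cpow y k) (RtoC (INR k))) r.

Definition Pr (r : nat) (y : CC) : CC :=
  Cmult (Cminus (RtoC 1) y) (Cexp (Tr r y)).
Definition LogPr (r : nat) (y : CC) : CC :=
  Cplus (CLog (Cminus (RtoC 1) y)) (Tr r y).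

Definition inD (x : CC) : Prop := ~ (snd x = 0 /\ 1/2 <= Rabs (fst x)).

(* (-1)^(r-1) as a complex number *)
Definition sgn_r (r : nat) : CC := if Nat.odd r then RtoC 1 else RtoC (-1).

(* n-th factor of the Kurokawa product:
   {P_r(x/n) P_r(-x/n)^((-1)^(r-1))}^(n^(r-1)) *)
Definition Sfactor (r : nat) (x : CC) (n : nat) : CC :=
  Cpow (Cmult (Pr r (Cdiv x (RtoC (INR n))))
              (if Nat.odd r then Pr r (Cdiv (Copp x) (RtoC (INR n)))
               else Cinv (Pr r (Cdiv (Copp x) (RtoC (INR n))))))
       (Nat.pow n (r - 1)).

Definition mSin (r : nat) (x : CC) : CC :=
  match r with
  | O => RtoC 0 (* unused *)
  | 1%nat => Cmult (RtoC 2) (Csin (Cmult (RtoC PI) x))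
  | _ => Cmult (Cexp (Cdiv (Cpow x (r - 1)) (RtoC (INR (r - 1)))))
               (climC (fun N => Cprod1 (Sfactor r x) N))
  end.

(* m-th term (n = 2m+1 odd) of the series defining Log C_r(x) *)
Definition Cterm (r : nat) (x : CC) (m : nat) : CC :=
  let n := INR (2 * m + 1) in
  Cmult (RtoC ((n / 2) ^ (r - 1)))
        (Cplus (LogPr r (Cdiv (Cmult (RtoC 2) x) (RtoC n)))
               (Cmult (sgn_r r) (LogPr r (Cdiv (Copp (Cmult (RtoC 2) x)) (RtoC n))))).

Definition mCos (r : nat) (x : CC) : CC :=
  match r with
  | O => RtoC 0 (* unused *)
  | 1%nat => Cmult (RtoC 2) (Ccos (Cmult (RtoC PI) x))
  | _ => Cexp (climC (fun N => Csum1 (fun k => Cterm r x (k - 1)) N))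
  end.

(* Main.v *)
Require Import Defs.
From Stdlib Require Import Reals.
From Coquelicot Require Import Coquelicot.
From Stdlib Require Import Lra Lia ClassicalEpsilon.

Lemma Cexp_add a b : Cexp (a + b)%C = (Cexp a * Cexp b)%C.
Proof.
  destruct a as [a1 a2], b as [b1 b2]; unfold Cexp; simpl.
  unfold Cmult; simpl. rewrite exp_plus, cos_plus, sin_plus.
  f_equal; ring.
Qed.

Lemma Cexp_0 : Cexp (RtoC 0) = RtoC 1.
Proof. unfold Cexp; simpl. rewrite exp_0, cos_0, sin_0. apply injective_projections; simpl; ring. Qed.

Lemma Cexp_neq0 z : Cexp z <> RtoC 0.
Proof.
  destruct z as [a b]; unfold Cexp; simpl. intro H.
  injection H as H1 H2.
  assert (He := exp_pos a).
  assert (cos b = 0) by (apply Rmult_eq_reg_l with (exp a); lra).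
  assert (sin b = 0) by (apply Rmult_eq_reg_l with (exp a); lra).
  assert (Hs := sin2_cos2 b). unfold Rsqr in Hs. rewrite H, H0 in Hs. lra.
Qed.

Lemma Cexp_opp z : (Cexp (- z) * Cexp z = 1)%C.
Proof. rewrite <- Cexp_add. replace (-z + z)%C with (RtoC 0) by ring. apply Cexp_0. Qed.

Lemma Cinv_Cexp z : Cinv (Cexp z) = Cexp (- z)%C.
Proof.
  assert (H := Cexp_opp z). assert (H0 := Cexp_neq0 z).
  transitivity ((Cexp (- z) * Cexp z) * / Cexp z)%C.
  - rewrite H. ring.
  - field. auto.
Qed.

Lemma Cpow_Cexp n z : Cpow (Cexp z) n = Cexp (RtoC (INR n) * z)%C.
Proof.
  induction n; simpl Cpow.
  - simpl INR. replace (RtoC 0 * z)%C with (RtoC 0) by ring. now rewrite Cexp_0.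
  - rewrite IHn, <- Cexp_add. f_equal. rewrite S_INR, RtoC_plus. ring.
Qed.

Lemma Cexp_CLog (w : C) : w <> RtoC 0 -> Cexp (CLog w) = w.
Proof.
  destruct w as [a b]; intro Hw.
  unfold Cexp, CLog, Carg, Cmod; cbn [fst snd].
  assert (Hq : 0 < a ^ 2 + b ^ 2).
  { destruct (Req_dec a 0); destruct (Req_dec b 0).
    - subst; exfalso; apply Hw; reflexivity.
    - nra. - nra. - nra. }
  set (m := sqrt (a ^ 2 + b ^ 2)).
  assert (Hm : 0 < m) by (apply sqrt_lt_R0; auto).
  assert (Hm2 : m * m = a ^ 2 + b ^ 2) by (apply sqrt_sqrt; lra).
  rewrite exp_ln by auto.
  assert (Hb : -1 <= a / m <= 1).
  { split.
    - apply Rmult_le_reg_r with m; auto. unfold Rdiv; rewrite Rmult_assoc, Rinv_l by lra. nra.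
    - apply Rmult_le_reg_r with m; auto. unfold Rdiv; rewrite Rmult_assoc, Rinv_l by lra. nra. }
  assert (Hs : sqrt (1 - (a / m)²) = Rabs b / m).
  { replace (1 - (a / m)²) with ((Rabs b / m)²).
    - apply sqrt_Rsqr. apply Rdiv_le_0_compat; [apply Rabs_pos | lra].
    - assert (Hbb : (Rabs b * Rabs b = b * b)%R).
      { rewrite <- Rabs_mult. apply Rabs_right. apply Rle_ge, Rle_0_sqr. }
      unfold Rsqr. unfold Rdiv.
      replace (Rabs b * / m * (Rabs b * / m))%R with (Rabs b * Rabs b * / (m * m))%R by (field; lra).
      replace (a * / m * (a * / m))%R with (a * a * / (m * m))%R by (field; lra).
      rewrite Hbb, Hm2. field. lra. }
  destruct (Rle_dec 0 b).
  - rewrite cos_acos, sin_acos, Hs, Rabs_right by (auto; lra). f_equal; field; lra.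
  - rewrite cos_neg, sin_neg, cos_acos, sin_acos, Hs, Rabs_left by (auto; lra). f_equal; field; lra.
Qed.

Fixpoint Rsum1 (f : nat -> R) (n : nat) : R :=
  match n with O => 0 | S m => Rsum1 f m + f (S m) end.

Lemma fst_Csum1 f n : fst (Csum1 f n) = Rsum1 (fun k => fst (f k)) n.
Proof. induction n; simpl; [reflexivity| rewrite IHn; reflexivity]. Qed.
Lemma snd_Csum1 f n : snd (Csum1 f n) = Rsum1 (fun k => snd (f k)) n.
Proof. induction n; simpl; [reflexivity| rewrite IHn; reflexivity]. Qed.

Lemma Rsum1_ext_pos f g n : (forall k, (1 <= k)%nat -> f k = g k) -> Rsum1 f n = Rsum1 g n.
Proof. intro H; induction n; simpl; auto. rewrite IHn, H; auto; lia. Qed.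
Lemma Csum1_ext_pos f g n : (forall k, (1 <= k)%nat -> f k = g k) -> Csum1 f n = Csum1 g n.
Proof. intro H; induction n; simpl; auto. rewrite IHn, H; auto; lia. Qed.

Lemma deriv_Rsum1 (g : nat -> R -> R) (dg : nat -> R) n t :
  (forall k, is_derive (g k) t (dg k)) ->
  is_derive (fun t => Rsum1 (fun k => g k t) n) t (Rsum1 dg n).
Proof.
  intro H; induction n; simpl.
  - auto_derive; auto.
  - apply (is_derive_plus (fun t => Rsum1 (fun k => g k t) n) (g (S n))); auto.
Qed.

Lemma Tr_scale r t y :
  Tr r (RtoC t * y)%C = Csum1 (fun k => (RtoC (t ^ k) * (Cpow y k / RtoC (INR k)))%C) r.
Proof.
  unfold Tr. apply Csum1_ext_pos. intros k _.
  rewrite Cpow_mult_l, RtoC_pow. unfold Cdiv. ring.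
Qed.

Lemma fst_scal s w : fst (RtoC s * w)%C = (s * fst w)%R.
Proof. destruct w; simpl; ring. Qed.
Lemma snd_scal s w : snd (RtoC s * w)%C = (s * snd w)%R.
Proof. destruct w; simpl; ring. Qed.

Lemma geo r t y :
  (Csum1 (fun k => RtoC (t ^ (k - 1)) * Cpow y k) r * (1 - RtoC t * y) =
   y * (1 - Cpow (RtoC t * y) r))%C.
Proof.
  induction r.
  - simpl. ring.
  - simpl Csum1. rewrite Cmult_plus_distr_r, IHr.
    simpl Cpow. rewrite Cpow_mult_l, RtoC_pow. simpl (S r - 1)%nat. rewrite Nat.sub_0_r.
    ring.
Qed.

Lemma Carg_pos (u v : R) : 0 < u -> Carg (u, v) = atan (v / u).
Proof.
  intro Hu. unfold Carg, Cmod; cbn [fst snd].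
  assert (Hq : 0 < u ^ 2 + v ^ 2) by nra.
  set (m := sqrt (u ^ 2 + v ^ 2)).
  assert (Hm : 0 < m) by (apply sqrt_lt_R0; auto).
  assert (Hm2 : (m * m = u ^ 2 + v ^ 2)%R) by (apply sqrt_sqrt; lra).
  assert (Hpos : 0 < u / m) by (apply Rdiv_lt_0_compat; auto).
  rewrite acos_atan by auto.
  assert (Hs : sqrt (1 - (u / m)²) = Rabs v / m).
  { replace (1 - (u / m)²) with ((Rabs v / m)²).
    - apply sqrt_Rsqr. apply Rdiv_le_0_compat; [apply Rabs_pos | lra].
    - assert (Hbb : (Rabs v * Rabs v = v * v)%R).
      { rewrite <- Rabs_mult. apply Rabs_right. apply Rle_ge, Rle_0_sqr. }
      unfold Rsqr. unfold Rdiv.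
      replace (Rabs v * / m * (Rabs v * / m))%R with (Rabs v * Rabs v * / (m * m))%R by (field; lra).
      replace (u * / m * (u * / m))%R with (u * u * / (m * m))%R by (field; lra).
      rewrite Hbb, Hm2. field. lra. }
  rewrite Hs.
  replace (Rabs v / m / (u / m)) with (Rabs v / u) by (field; lra).
  destruct (Rle_dec 0 v).
  - rewrite Rabs_right by lra. reflexivity.
  - rewrite Rabs_left by lra. rewrite <- atan_opp. f_equal. field. lra.
Qed.

Lemma fst_plus u v : fst (u + v)%C = (fst u + fst v)%R.
Proof. destruct u, v; reflexivity. Qed.
Lemma snd_plus u v : snd (u + v)%C = (snd u + snd v)%R.
Proof. destruct u, v; reflexivity. Qed.
Lemma fst_divR w d : d <> 0 -> fst (w / RtoC d)%C = (fst w / d)%R.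
Proof. intro; destruct w; unfold Cdiv, Cinv, Cmult; simpl. field. auto. Qed.
Lemma snd_divR w d : d <> 0 -> snd (w / RtoC d)%C = (snd w / d)%R.
Proof. intro; destruct w; unfold Cdiv, Cinv, Cmult; simpl. field. auto. Qed.

Lemma Rsum1_zero n : Rsum1 (fun _ => 0) n = 0.
Proof. induction n; simpl; [reflexivity| rewrite IHn; ring]. Qed.

Lemma abs_snd_le w : Rabs (snd w) <= Cmod w.
Proof.
  destruct w as [u v]; unfold Cmod; simpl.
  rewrite <- sqrt_Rsqr_abs. apply sqrt_le_1_alt. unfold Rsqr. nra.
Qed.
Lemma abs_fst_le w : Rabs (fst w) <= Cmod w.
Proof. apply re_le_Cmod. Qed.

Lemma Cmod_ty t y : Cmod (RtoC t * y)%C = (Rabs t * Cmod y)%R.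
Proof. rewrite Cmod_mult, Cmod_R. reflexivity. Qed.

Lemma mvt_bound (phi dphi : R -> R) M :
  (forall t, 0 <= t <= 1 -> is_derive phi t (dphi t)) ->
  (forall t, 0 <= t <= 1 -> Rabs (dphi t) <= M) -> Rabs (phi 1 - phi 0) <= M.
Proof.
  intros Hd Hb.
  destruct (MVT_gen phi 0 1 dphi) as [c [Hc Heq]].
  - intros x Hx. rewrite Rmin_left, Rmax_right in Hx by lra. apply Hd. lra.
  - intros x Hx. rewrite Rmin_left, Rmax_right in Hx by lra.
    apply continuity_pt_filterlim. apply (ex_derive_continuous phi).
    exists (dphi x). apply Hd. lra.
  - rewrite Rmin_left, Rmax_right in Hc by lra. rewrite Heq.
    replace (dphi c * (1 - 0)) with (dphi c) by ring. apply Hb; lra.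
Qed.

Lemma sqrt2_le_2 : sqrt 2 <= 2.
Proof.
  replace 2 with (sqrt 4) at 2. - apply sqrt_le_1_alt. lra.
  - replace 4 with (2 * 2) by ring. rewrite sqrt_square; lra.
Qed.

Section Bound.
Variable r : nat.
Variables a b : R.
Let y : C := (a, b).
Let c1 k := fst (Cpow y k / RtoC (INR k))%C.
Let c2 k := snd (Cpow y k / RtoC (INR k))%C.
Let q t := ((1 - t * a) ^ 2 + (t * b) ^ 2)%R.
Let phi1 t := (ln (sqrt (q t)) + Rsum1 (fun k => c1 k * t ^ k) r)%R.
Let phi2 t := (atan (- (t * b) / (1 - t * a)) + Rsum1 (fun k => c2 k * t ^ k) r)%R.
Let W t := (- y / (1 - RtoC t * y) + Csum1 (fun k => RtoC (t ^ (k - 1)) * Cpow y k) r)%C.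

Hypothesis Hy : Cmod y <= 1/2.

Lemma Ha : Rabs a <= 1/2.
Proof. apply Rle_trans with (Cmod y); auto. apply (abs_fst_le y). Qed.
Lemma Hb : Rabs b <= 1/2.
Proof. apply Rle_trans with (Cmod y); auto. apply (abs_snd_le y). Qed.

Lemma Hden t : 0 <= t <= 1 -> 1/2 <= 1 - t * a.
Proof. intro Ht. assert (H := Ha). apply Rabs_le_between in H. nra. Qed.

Lemma Hq t : 0 <= t <= 1 -> 0 < q t.
Proof. intro Ht. assert (H := Hden t Ht). unfold q. nra. Qed.

Lemma W_fst t : 0 <= t <= 1 ->
  fst (W t) = ((t * (a * a + b * b) - a) / q t + Rsum1 (fun k => c1 k * (INR k * 1 * t ^ Nat.pred k)) r)%R.
Proof.
  intro Ht. assert (H1 := Hq t Ht). unfold W. rewrite fst_plus, fst_Csum1. f_equal.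
  - unfold y, q in *; unfold Cdiv, Cinv, Cmult; simpl. field.
    intro H0. apply (Rlt_irrefl 0). rewrite <- H0 at 2. clear H0. nra.
  - apply Rsum1_ext_pos. intros k Hk. unfold c1. rewrite fst_scal, fst_divR.
    + replace (Nat.pred k) with (k - 1)%nat by lia. field. apply not_0_INR. lia.
    + apply not_0_INR. lia.
Qed.

Lemma W_snd t : 0 <= t <= 1 ->
  snd (W t) = (- b / q t + Rsum1 (fun k => c2 k * (INR k * 1 * t ^ Nat.pred k)) r)%R.
Proof.
  intro Ht. assert (H1 := Hq t Ht). unfold W. rewrite snd_plus, snd_Csum1. f_equal.
  - unfold y, q in *; unfold Cdiv, Cinv, Cmult; simpl. field.
    intro H0. apply (Rlt_irrefl 0). rewrite <- H0 at 2. clear H0. nra.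
  - apply Rsum1_ext_pos. intros k Hk. unfold c2. rewrite snd_scal, snd_divR.
    + replace (Nat.pred k) with (k - 1)%nat by lia. field. apply not_0_INR. lia.
    + apply not_0_INR. lia.
Qed.

Lemma poly_deriv (c : nat -> R) t :
  is_derive (fun t => Rsum1 (fun k => c k * t ^ k) r) t
            (Rsum1 (fun k => c k * (INR k * 1 * t ^ Nat.pred k)) r).
Proof.
  apply (deriv_Rsum1 (fun k t => c k * t ^ k) (fun k => c k * (INR k * 1 * t ^ Nat.pred k))).
  intro k. auto_derive; auto. ring.
Qed.

Lemma phi1_deriv t : 0 <= t <= 1 -> is_derive phi1 t (fst (W t)).
Proof.
  intro Ht. rewrite W_fst by auto. assert (H1 := Hq t Ht).
  apply (is_derive_plus (fun t => ln (sqrt (q t))) (fun t => Rsum1 (fun k => c1 k * t ^ k) r)).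
  - unfold q in *. auto_derive.
    + repeat split; try apply sqrt_lt_R0; nra.
    + match goal with |- context [sqrt ?Q] =>
        assert (HS: sqrt Q * sqrt Q = Q) by (apply sqrt_sqrt; nra);
        assert (HP: 0 < sqrt Q) by (apply sqrt_lt_R0; nra);
        assert (HQ: Q = (1 - t*a)^2 + (t*b)^2) by ring;
        set (s := sqrt Q) in * end.
      match goal with |- ?L = _ => transitivity ((- a * (1 - t * a) + b * (t * b)) / (s * s)) end.
      * field. lra.
      * rewrite HS, HQ. field. lra.
  - apply poly_deriv.
Qed.

Lemma phi2_deriv t : 0 <= t <= 1 -> is_derive phi2 t (snd (W t)).
Proof.
  intro Ht. rewrite W_snd by auto. assert (H1 := Hq t Ht). assert (H2 := Hden t Ht).
  apply (is_derive_plus (fun t => atan (- (t * b) / (1 - t * a))) (fun t => Rsum1 (fun k => c2 k * t ^ k) r)).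
  - set (g := fun t => - (t * b) / (1 - t * a)).
    assert (Hg : is_derive g t (- b / (1 - t * a) ^ 2)).
    { unfold g. auto_derive. lra. field. lra. }
    assert (Hat : is_derive atan (g t) (/ (1 + g t ^ 2))).
    { apply is_derive_Reals. apply derivable_pt_lim_atan. }
    eapply is_derive_ext. { intro s. reflexivity. }
    replace (- b / q t) with (scal (- b / (1 - t * a) ^ 2) (/ (1 + g t ^ 2))).
    + apply (is_derive_comp atan g). auto. auto.
    + unfold scal; simpl; unfold mult; simpl. unfold g, q. field. unfold q in H1. split; lra.
  - apply poly_deriv.
Qed.

Lemma W_bound t : 0 <= t <= 1 -> Cmod (W t) <= 2 * Cmod y ^ S r.
Proof.
  intro Ht.
  set (d := (1 - RtoC t * y)%C).
  assert (Hd : 1/2 <= Cmod d).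
  { assert (H := Cmod_triangle d (RtoC t * y)%C).
    replace (d + RtoC t * y)%C with (RtoC 1) in H by (unfold d; ring).
    rewrite Cmod_1, Cmod_ty, Rabs_right in H by lra.
    assert (Hy0 := Cmod_ge_0 y). nra. }
  assert (Hd0 : d <> RtoC 0).
  { intro H0. rewrite H0, Cmod_0 in Hd. lra. }
  assert (HW : (W t * d = - y * Cpow (RtoC t * y) r)%C).
  { unfold W. rewrite Cmult_plus_distr_r. fold d. rewrite geo. field. auto. }
  assert (HM : Cmod (W t) * Cmod d = Cmod y * (Rabs t * Cmod y) ^ r).
  { rewrite <- Cmod_mult, HW, Cmod_mult, Cmod_opp, Cmod_pow, Cmod_ty. reflexivity. }
  assert (Hy0 := Cmod_ge_0 y).
  assert (Hp : (Rabs t * Cmod y) ^ r <= Cmod y ^ r).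
  { apply pow_incr. rewrite Rabs_right by lra. split; [nra|]. nra. }
  assert (HW0 := Cmod_ge_0 (W t)).
  simpl. assert (0 <= Cmod y ^ r) by (apply pow_le; auto). nra.
Qed.

Lemma LogPr_bound_sec : Cmod (LogPr r y) <= 4 * Cmod y ^ S r.
Proof.
  assert (HF : fst (LogPr r y) = phi1 1 - phi1 0).
  { assert (H0 : phi1 0 = 0).
    { unfold phi1, q. replace ((1 - 0 * a) ^ 2 + (0 * b) ^ 2) with 1 by ring.
      rewrite sqrt_1, ln_1. rewrite (Rsum1_ext_pos _ (fun _ => 0)), Rsum1_zero. ring.
      intros k Hk. rewrite pow_i by lia. ring. }
    rewrite H0, Rminus_0_r. unfold LogPr, phi1. rewrite fst_plus. f_equal.
    - unfold CLog. simpl fst. f_equal. unfold Cmod, q, y. f_equal. simpl. ring.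
    - replace (Tr r y) with (Tr r (RtoC 1 * y)%C) by (f_equal; ring).
      rewrite Tr_scale, fst_Csum1. apply Rsum1_ext_pos. intros k Hk.
      rewrite fst_scal. unfold c1. ring. }
  assert (HS : snd (LogPr r y) = phi2 1 - phi2 0).
  { assert (H0 : phi2 0 = 0).
    { unfold phi2. replace (- (0 * b) / (1 - 0 * a)) with 0 by (field; lra).
      rewrite atan_0. rewrite (Rsum1_ext_pos _ (fun _ => 0)), Rsum1_zero. ring.
      intros k Hk. rewrite pow_i by lia. ring. }
    rewrite H0, Rminus_0_r. unfold LogPr, phi2. rewrite snd_plus. f_equal.
    - unfold CLog. simpl snd.
      replace (1 - y)%C with ((1 - a)%R, (- b)%R) by (apply injective_projections; unfold y; simpl; ring).
      assert (H := Ha). apply Rabs_le_between in H.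
      rewrite Carg_pos by lra. f_equal. field. lra.
    - replace (Tr r y) with (Tr r (RtoC 1 * y)%C) by (f_equal; ring).
      rewrite Tr_scale, snd_Csum1. apply Rsum1_ext_pos. intros k Hk.
      rewrite snd_scal. unfold c2. ring. }
  assert (B1 : Rabs (fst (LogPr r y)) <= 2 * Cmod y ^ S r).
  { rewrite HF. apply (mvt_bound phi1 (fun t => fst (W t))).
    - apply phi1_deriv. - intros t Ht. eapply Rle_trans; [apply abs_fst_le| apply W_bound; auto]. }
  assert (B2 : Rabs (snd (LogPr r y)) <= 2 * Cmod y ^ S r).
  { rewrite HS. apply (mvt_bound phi2 (fun t => snd (W t))).
    - apply phi2_deriv. - intros t Ht. eapply Rle_trans; [apply abs_snd_le| apply W_bound; auto]. }
  eapply Rle_trans; [apply Cmod_2Rmax|].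
  assert (Hm : Rmax (Rabs (fst (LogPr r y))) (Rabs (snd (LogPr r y))) <= 2 * Cmod y ^ S r)
    by (apply Rmax_lub; auto).
  assert (H2 := sqrt2_le_2). assert (H3 : 0 <= sqrt 2) by apply sqrt_pos.
  assert (H4 : 0 <= Rmax (Rabs (fst (LogPr r y))) (Rabs (snd (LogPr r y)))).
  { eapply Rle_trans; [apply Rabs_pos| apply Rmax_l]. }
  nra.
Qed.
End Bound.

Lemma LogPr_bound r y : Cmod y <= 1/2 -> Cmod (LogPr r y) <= 4 * Cmod y ^ S r.
Proof. destruct y as [a b]. intro H. apply (LogPr_bound_sec r a b H). Qed.

Definition aterm (r : nat) (x : CC) (n : nat) : CC :=
  (RtoC (INR (Nat.pow n (r - 1))) *
   (LogPr r (x / RtoC (INR n)) + sgn_r r * LogPr r (Copp x / RtoC (INR n))))%C.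

Lemma Cmod_sgn r : Cmod (sgn_r r) = 1.
Proof. unfold sgn_r. destruct (Nat.odd r); rewrite Cmod_R; [apply Rabs_R1|]. rewrite Rabs_left by lra; ring. Qed.

Lemma aterm_bound r x n : (1 <= r)%nat -> 0 < INR n -> 2 * Cmod x <= INR n ->
  Cmod (aterm r x n) <= 8 * Cmod x ^ S r / INR n ^ 2.
Proof.
  intros Hr Hn Hx.
  assert (Hx0 := Cmod_ge_0 x).
  assert (Hq : forall z, Cmod z = Cmod x -> Cmod (z / RtoC (INR n))%C = Cmod x / INR n).
  { intros z Hz. rewrite Cmod_div, Cmod_R, Rabs_right, Hz by (try lra; intro H; apply RtoC_inj in H; lra). reflexivity. }
  assert (H1 : Cmod (x / RtoC (INR n))%C <= 1/2).
  { rewrite Hq by auto. apply Rmult_le_reg_r with (INR n); auto. unfold Rdiv; rewrite Rmult_assoc, Rinv_l by lra. lra. }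
  assert (H2 : Cmod (Copp x / RtoC (INR n))%C <= 1/2).
  { rewrite Hq by (apply Cmod_opp). apply Rmult_le_reg_r with (INR n); auto. unfold Rdiv; rewrite Rmult_assoc, Rinv_l by lra. lra. }
  assert (B1 := LogPr_bound r _ H1). assert (B2 := LogPr_bound r _ H2).
  rewrite Hq in B1 by auto. rewrite Hq in B2 by (apply Cmod_opp).
  unfold aterm. rewrite Cmod_mult, Cmod_R, Rabs_right by (apply Rle_ge, pos_INR).
  rewrite pow_INR.
  assert (HS : Cmod (LogPr r (x / RtoC (INR n)) + sgn_r r * LogPr r (Copp x / RtoC (INR n)))%C
               <= 8 * (Cmod x / INR n) ^ S r).
  { eapply Rle_trans; [apply Cmod_triangle|]. rewrite Cmod_mult, Cmod_sgn. lra. }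
  assert (Hp : 0 <= INR n ^ (r - 1)) by (apply pow_le; lra).
  eapply Rle_trans; [apply Rmult_le_compat_l; [exact Hp| exact HS]|].
  right. replace (S r) with ((r - 1) + 2)%nat by lia.
  unfold Rdiv. rewrite Rpow_mult_distr, pow_add, pow_add.
  rewrite pow_inv, pow_inv. field. repeat split; try apply pow_nonzero; lra.
Qed.

Lemma telescope_series : is_series (fun k => / INR (S k) - / INR (S (S k))) 1.
Proof.
  unfold is_series.
  assert (Hs : forall N, sum_n (fun k => / INR (S k) - / INR (S (S k))) N = 1 - / INR (S (S N))).
  { induction N.
    - rewrite sum_O. simpl. field.
    - unfold sum_n in *. rewrite sum_n_Sm by lia. rewrite IHN. unfold plus; simpl.
      ring. }
  assert (Hl : is_lim_seq (fun N => 1 - / INR (S (S N))) 1).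
  { assert (H0 : is_lim_seq (fun N => 1 - / INR (S (S N))) (1 - 0)); [|replace (1 - 0) with 1 in H0 by ring; exact H0].
    apply is_lim_seq_minus'.
    - apply is_lim_seq_const.
    - assert (H := is_lim_seq_inv _ _ is_lim_seq_INR).
      simpl in H. specialize (H ltac:(discriminate)).
      apply (is_lim_seq_incr_n _ 2) in H.
      eapply is_lim_seq_ext; [|exact H]. intro n. cbv beta. replace (n + 2)%nat with (S (S n)) by lia. reflexivity. }
  eapply filterlim_ext; [intro N; symmetry; apply Hs|]. exact Hl.
Qed.

Lemma filterlim_shift (f : nat -> CC) L :
  filterlim (fun N => f (S N)) eventually (locally L) ->
  filterlim f eventually (locally L).
Proof.
  intros H P HP. destruct (H P HP) as [N HN]. exists (S N).
  intros n Hn. destruct n; [lia|]. apply HN. lia.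
Qed.

Lemma Csum1_sum_n f N : Csum1 f (S N) = sum_n (fun k => f (S k)) N.
Proof.
  induction N.
  - rewrite sum_O. simpl. apply injective_projections; simpl; ring.
  - unfold sum_n in *. rewrite sum_n_Sm by lia. rewrite <- IHN. reflexivity.
Qed.

Lemma inv_sq_le s : 1 <= s -> / s ^ 2 <= 2 * (/ s - / (s + 1)).
Proof.
  intro Hs.
  assert (E : 2 * (/ s - / (s + 1)) - / s ^ 2 = (s - 1) / (s ^ 2 * (s + 1))) by (field; lra).
  assert (0 <= (s - 1) / (s ^ 2 * (s + 1))).
  { apply Rdiv_le_0_compat; [lra|]. apply Rmult_lt_0_compat; [apply pow_lt|]; lra. }
  lra.
Qed.

Lemma aterm_conv r x : (1 <= r)%nat ->
  exists L, filterlim (fun N => Csum1 (aterm r x) N) eventually (locally L).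
Proof.
  intro Hr.
  destruct (INR_unbounded (2 * Cmod x)) as [N0 HN0].
  set (M := Cmod x ^ S r).
  assert (HM : 0 <= M) by (apply pow_le, Cmod_ge_0).
  set (u := fun k => aterm r x (S k)).
  assert (Hv : ex_series (fun k => u (N0 + k)%nat)).
  { apply (@ex_series_le C_AbsRing C_CompleteNormedModule _ (fun k => 16 * M * (/ INR (S k) - / INR (S (S k))))).
    - intro k. change (Cmod (u (N0 + k)%nat) <= 16 * M * (/ INR (S k) - / INR (S (S k)))). unfold u.
      assert (Hk : 0 < INR (S k)) by (apply lt_0_INR; lia).
      assert (Hk2 : INR (S k) <= INR (S (N0 + k))) by (apply le_INR; lia).
      eapply Rle_trans; [apply aterm_bound; auto|].
      + lra.
      + assert (INR N0 <= INR (S (N0 + k))) by (apply le_INR; lia). lra.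
      + assert (H1 : / INR (S (N0 + k)) ^ 2 <= / INR (S k) ^ 2).
        { apply Rinv_le_contravar. apply pow_lt; lra. apply pow_incr; lra. }
        assert (H2 := inv_sq_le (INR (S k))).
        rewrite <- (S_INR (S k)) in H2. specialize (H2 ltac:(rewrite S_INR; assert (H3 := pos_INR k); lra)).
        unfold Rdiv. apply Rle_trans with (8 * M * / INR (S k) ^ 2).
        * apply Rmult_le_compat_l; lra.
        * apply Rle_trans with (8 * M * (2 * (/ INR (S k) - / INR (S (S k))))).
          -- apply Rmult_le_compat_l; lra.
          -- right; ring.
    - assert (T := is_series_scal_l (16 * M) _ _ telescope_series).
      eexists. eapply is_series_ext; [|exact T]. intro k. reflexivity. }
  apply (ex_series_incr_n u N0) in Hv.
  destruct Hv as [l Hl]. exists l. apply filterlim_shift.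
  eapply filterlim_ext; [intro N; symmetry; apply Csum1_sum_n|]. exact Hl.
Qed.

Lemma climC_spec u l : filterlim u eventually (locally l) -> climC u = l.
Proof.
  intro H. unfold climC.
  assert (Hs := epsilon_spec (inhabits (RtoC 0)) (fun l => filterlim u eventually (locally l)) (ex_intro _ l H)).
  exact (@filterlim_locally_unique nat C_AbsRing C_NormedModule eventually _ u _ _ Hs H).
Qed.

Lemma lim_fst (s : nat -> CC) L : filterlim s eventually (locally L) ->
  filterlim (fun n => fst (s n)) eventually (locally (fst L)).
Proof.
  intros H P [eps HP]. apply (H (fun z => P (fst z))). exists eps. intros z Hz. apply HP. destruct Hz; auto.
Qed.
Lemma lim_snd (s : nat -> CC) L : filterlim s eventually (locally L) ->
  filterlim (fun n => snd (s n)) eventually (locally (snd L)).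
Proof.
  intros H P [eps HP]. apply (H (fun z => P (snd z))). exists eps. intros z Hz. apply HP. destruct Hz; auto.
Qed.
Lemma lim_pair (p q : nat -> R) a b :
  filterlim p eventually (locally a) -> filterlim q eventually (locally b) ->
  filterlim (fun n => ((p n, q n) : CC)) eventually (locally ((a, b) : CC)).
Proof.
  intros Hp Hq P [eps HP].
  destruct (Hp (ball a eps) (locally_ball a eps)) as [N1 H1].
  destruct (Hq (ball b eps) (locally_ball b eps)) as [N2 H2].
  exists (max N1 N2). intros n Hn. apply HP. split; simpl; [apply H1 | apply H2]; lia.
Qed.

Lemma lim_Cexp (s : nat -> CC) L : filterlim s eventually (locally L) ->
  filterlim (fun n => Cexp (s n)) eventually (locally (Cexp L)).
Proof.
  intro H. assert (H1 := lim_fst s L H). assert (H2 := lim_snd s L H).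
  assert (E1 : is_lim_seq (fun n => exp (fst (s n))) (exp (fst L))).
  { apply (is_lim_seq_continuous exp (fun n => fst (s n))).
    apply derivable_continuous_pt, derivable_exp. exact H1. }
  assert (C1 : is_lim_seq (fun n => cos (snd (s n))) (cos (snd L))).
  { apply (is_lim_seq_continuous cos (fun n => snd (s n))). apply continuity_cos. exact H2. }
  assert (S1 : is_lim_seq (fun n => sin (snd (s n))) (sin (snd L))).
  { apply (is_lim_seq_continuous sin (fun n => snd (s n))). apply continuity_sin. exact H2. }
  unfold Cexp. apply lim_pair.
  - exact (is_lim_seq_mult' _ _ _ _ E1 C1).
  - exact (is_lim_seq_mult' _ _ _ _ E1 S1).
Qed.

Lemma lim_lin (u v : nat -> CC) l m c :
  filterlim u eventually (locally l) -> filterlim v eventually (locally m) ->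
  filterlim (fun n => (u n + c * v n)%C) eventually (locally (l + c * m)%C).
Proof.
  intros Hu Hv.
  apply (filterlim_comp_2 (G := locally l) (H := locally (c * m)%C) u (fun n => (c * v n)%C) Cplus); auto.
  - apply (filterlim_comp _ _ _ v (fun z => (c * z)%C) eventually (locally m)); auto.
    exact (@filterlim_scal_r C_AbsRing C_NormedModule c m).
  - exact (@filterlim_plus C_AbsRing C_NormedModule l (c * m)%C).
Qed.

Lemma lim_sub2 (u : nat -> CC) l : filterlim u eventually (locally l) ->
  filterlim (fun N => u (2 * N)%nat) eventually (locally l).
Proof.
  intros H P HP. destruct (H P HP) as [N HN]. exists N. intros n Hn. apply HN. lia.
Qed.

Lemma RtoC_neq0 d : d <> 0 -> RtoC d <> RtoC 0.
Proof. intros H E. apply H. apply RtoC_inj in E. exact E. Qed.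

Lemma Pr_Cexp r y : (RtoC 1 - y)%C <> RtoC 0 -> Pr r y = Cexp (LogPr r y).
Proof. intro H. unfold Pr, LogPr. rewrite Cexp_add, Cexp_CLog; auto. Qed.

Lemma z_ok (x : CC) n (z : CC) c : inD x -> (1 <= n)%nat -> fst z = (c * fst x)%R -> snd z = (c * snd x)%R ->
  Rabs c <= 2 -> (RtoC 1 - z / RtoC (INR n))%C <> RtoC 0.
Proof.
  intros HD Hn H1 H2 Hc E.
  assert (Hn0 : 1 <= INR n) by (apply (le_INR 1); lia).
  assert (Ez : z = RtoC (INR n)).
  { transitivity ((z / RtoC (INR n)) * RtoC (INR n))%C.
    - field. apply RtoC_neq0. lra.
    - replace (z / RtoC (INR n))%C with (RtoC 1) by (rewrite <- (Cplus_0_l (z / _)%C), <- E; ring). ring. }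
  rewrite Ez in H1, H2. simpl in H1, H2.
  apply HD. split.
  - destruct (Req_dec c 0). + subst. lra. + apply Rmult_eq_reg_l with c; auto. lra.
  - assert (Habs : Rabs (INR n) = Rabs c * Rabs (fst x)) by (rewrite H1, Rabs_mult; reflexivity).
    rewrite Rabs_right in Habs by lra.
    assert (H0 := Rabs_pos (fst x)). nra.
Qed.

Lemma Sfactor_eq r x n : (RtoC 1 - x / RtoC (INR n))%C <> RtoC 0 ->
  (RtoC 1 - Copp x / RtoC (INR n))%C <> RtoC 0 ->
  Sfactor r x n = Cexp (aterm r x n).
Proof.
  intros H1 H2. unfold Sfactor, aterm, sgn_r. rewrite !Pr_Cexp by auto.
  destruct (Nat.odd r).
  - rewrite <- Cexp_add, Cpow_Cexp. f_equal. ring.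
  - rewrite Cinv_Cexp, <- Cexp_add, Cpow_Cexp. f_equal.
    replace (RtoC (-1)) with (- (1))%C by (apply injective_projections; simpl; ring). ring.
Qed.

Lemma Cprod_eq r x N : (forall n, (1 <= n)%nat -> Sfactor r x n = Cexp (aterm r x n)) ->
  Cprod1 (Sfactor r x) N = Cexp (Csum1 (aterm r x) N).
Proof.
  intro H. induction N; simpl.
  - symmetry. apply Cexp_0.
  - rewrite IHN, H, Cexp_add by lia. reflexivity.
Qed.

Lemma mSin_eq r x L : (2 <= r)%nat ->
  (forall n, (1 <= n)%nat -> Sfactor r x n = Cexp (aterm r x n)) ->
  filterlim (Csum1 (aterm r x)) eventually (locally L) ->
  mSin r x = (Cexp (Cpow x (r - 1) / RtoC (INR (r - 1))) * Cexp L)%C.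
Proof.
  intros Hr HS HL. destruct r as [|[|r']]; try lia.
  unfold mSin; cbv beta iota. f_equal. apply climC_spec.
  eapply filterlim_ext; [intro N; symmetry; apply Cprod_eq; auto|]. apply lim_Cexp; auto.
Qed.

Lemma mCos_eq r x L : (2 <= r)%nat ->
  filterlim (fun N => Csum1 (fun k => Cterm r x (k - 1)) N) eventually (locally L) ->
  mCos r x = Cexp L.
Proof.
  intros Hr HL. destruct r as [|[|r']]; try lia.
  unfold mCos; cbv beta iota. f_equal. apply climC_spec. exact HL.
Qed.

Lemma Cterm_rel r x m :
  (RtoC (2 ^ (r - 1)) * Cterm r x m = aterm r (RtoC 2 * x)%C (2 * m + 1))%C.
Proof.
  unfold Cterm, aterm. cbv zeta. rewrite Cmult_assoc, <- RtoC_mult.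
  f_equal. f_equal. rewrite pow_INR, <- Rpow_mult_distr. f_equal. field.
Qed.

Lemma aterm_even r x m : (1 <= m)%nat ->
  aterm r (RtoC 2 * x)%C (2 * m) = (RtoC (2 ^ (r - 1)) * aterm r x m)%C.
Proof.
  intro Hm. assert (Hm0 : INR m <> 0) by (apply not_0_INR; lia).
  unfold aterm. rewrite Nat.pow_mul_l, !mult_INR, pow_INR.
  replace (INR 2) with 2 by (simpl; ring).
  assert (E1 : ((RtoC 2 * x) / RtoC (2 * INR m) = x / RtoC (INR m))%C).
  { rewrite RtoC_mult. field. repeat split; apply RtoC_neq0; lra. }
  assert (E2 : (Copp (RtoC 2 * x) / RtoC (2 * INR m) = Copp x / RtoC (INR m))%C).
  { rewrite RtoC_mult. field. repeat split; apply RtoC_neq0; lra. }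
  rewrite E1, E2, RtoC_mult. ring.
Qed.

Lemma sum_rel r x N :
  Csum1 (aterm r (RtoC 2 * x)%C) (2 * N) =
  (RtoC (2 ^ (r - 1)) * (Csum1 (fun k => Cterm r x (k - 1)) N + Csum1 (aterm r x) N))%C.
Proof.
  induction N.
  - simpl. ring.
  - replace (2 * S N)%nat with (S (S (2 * N))) by lia. cbn [Csum1].
    rewrite IHN. replace (S (2 * N)) with (2 * N + 1)%nat by lia.
    rewrite <- Cterm_rel. replace (S (2 * N + 1)) with (2 * S N)%nat by lia.
    rewrite aterm_even by lia. replace (S N - 1)%nat with N by lia. ring.
Qed.

Lemma case1 x : mSin 1 x <> RtoC 0 ->
  Cpow (mCos 1 x) (2 ^ (1 - 1)) = Cdiv (mSin 1 (Cmult (RtoC 2) x)) (Cpow (mSin 1 x) (2 ^ (1 - 1))).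
Proof.
  intro H. unfold mSin, mCos in *. simpl Cpow. unfold Csin, Ccos in *.
  set (w := (Ci * (RtoC PI * x))%C) in *.
  replace (Ci * (RtoC PI * (RtoC 2 * x)))%C with (w + w)%C by (unfold w; ring).
  replace (- (w + w))%C with (- w + - w)%C by ring.
  rewrite !Cexp_add.
  assert (HEF : (Cexp w - Cexp (- w))%C <> RtoC 0).
  { intro E. apply H. rewrite E. unfold Cdiv. ring. }
  assert (Hi : Ci <> RtoC 0).
  { intro E. injection E. lra. }
  field. repeat split; auto.
Qed.

Lemma case2 r x : (2 <= r)%nat -> inD x ->
  Cpow (mCos r x) (2 ^ (r - 1)) =
  Cdiv (mSin r (Cmult (RtoC 2) x)) (Cpow (mSin r x) (2 ^ (r - 1))).
Proof.
  intros Hr HD.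
  destruct (aterm_conv r x ltac:(lia)) as [L1 H1].
  destruct (aterm_conv r (RtoC 2 * x)%C ltac:(lia)) as [L2 H2].
  set (K := RtoC (2 ^ (r - 1))).
  assert (HK : K <> RtoC 0) by (apply RtoC_neq0, pow_nonzero; lra).
  assert (Hc : filterlim (fun N => Csum1 (fun k => Cterm r x (k - 1)) N) eventually
                 (locally ((RtoC 0 + / K * L2) + RtoC (-1) * L1)%C)).
  { eapply filterlim_ext; [|apply lim_lin; [apply lim_lin; [apply filterlim_const | apply (lim_sub2 _ _ H2)] | exact H1]].
    intro N. cbv beta. rewrite sum_rel. fold K.
    replace (RtoC (-1)) with (- (1))%C by (apply injective_projections; simpl; ring).
    field. auto. }
  assert (Hx : forall n, (1 <= n)%nat -> Sfactor r x n = Cexp (aterm r x n)).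
  { intros n Hn. apply Sfactor_eq.
    - apply (z_ok x n x 1); auto; [ring | ring | rewrite Rabs_R1; lra].
    - apply (z_ok x n (Copp x) (-1)); auto; [simpl; ring | simpl; ring | rewrite Rabs_left by lra; lra]. }
  assert (H2x : forall n, (1 <= n)%nat -> Sfactor r (RtoC 2 * x)%C n = Cexp (aterm r (RtoC 2 * x)%C n)).
  { intros n Hn. apply Sfactor_eq.
    - apply (z_ok x n (RtoC 2 * x)%C 2); auto; [simpl; ring | simpl; ring | rewrite Rabs_right by lra; lra].
    - apply (z_ok x n (Copp (RtoC 2 * x))%C (-2)); auto; [simpl; ring | simpl; ring | rewrite Rabs_left by lra; lra]. }
  rewrite (mCos_eq r x _ Hr Hc), (mSin_eq r x L1 Hr Hx H1), (mSin_eq r _ L2 Hr H2x H2).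
  rewrite <- !Cexp_add, !Cpow_Cexp. unfold Cdiv. rewrite Cinv_Cexp, <- Cexp_add.
  f_equal. rewrite Cpow_mult_l, <- RtoC_pow, pow_INR.
  replace (INR 2) with 2 by (simpl; ring). fold K.
  assert (Hd : RtoC (INR (r - 1)) <> RtoC 0) by (apply RtoC_neq0, not_0_INR; lia).
  replace (RtoC (-1)) with (- (1))%C by (apply injective_projections; simpl; ring).
  field. split; auto.
Qed.

Theorem corollary3p2 (r : nat) (x : Complex.C) :
  ((r = 1%nat /\ mSin 1 x <> RtoC 0) \/ ((2 <= r)%nat /\ inD x)) ->
  Cpow (mCos r x) (2 ^ (r - 1)) =
  Cdiv (mSin r (Cmult (RtoC 2) x)) (Cpow (mSin r x) (2 ^ (r - 1))).
Proof.
  intros [[-> H] | [Hr H]].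
  - apply case1; auto.
  - apply case2; auto.
Qed.
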